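(* For every $N$ there exists a positive integer $n$ with at least $N$ distinct prime factors such that $\gamma(X_n)\le\gamma_t(X_n)\le g(n)-2$.
   Context: For a positive integer $n$, $X_n$ is the graph on $\{0,\dots,n-1\}$ with $a,b$ adjacent iff $\gcd(a-b,n)=1$. The Jacobsthal function $g(n)$ is the least positive integer $m$ such that every set of $m$ consecutive integers contains an integer coprime to $n$. $\gamma(G)$ is the domination number (minimum size of a set $S$ such that every vertex is in $S$ or adjacent to a vertex of $S$); $\gamma_t(G)$ is the total domination number (minimum size of a set $S$ such that every vertex of $G$ is adjacent to some vertex of $S$). *)

(* Defs.v *)
From HB Require Import structures.
From mathcomp Require Import all_boot all_order all_algebra.
Set Implicit Arguments. Unset Strict Implicit. Unset Printing Implicit Defensive.
Import Order.TTheory GRing.Theory Num.Theory.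

Definition Xadj (n : nat) (a b : 'I_n) : bool :=
  (a != b) && coprimez ((a : nat)%:Z - (b : nat)%:Z) (n : nat)%:Z.

Definition dominating (n : nat) (S : {set 'I_n}) : Prop :=
  forall v : 'I_n, v \in S \/ exists2 s, s \in S & Xadj v s.

Definition total_dominating (n : nat) (S : {set 'I_n}) : Prop :=
  forall v : 'I_n, exists2 s, s \in S & Xadj v s.

Definition is_domination_number (n k : nat) : Prop :=
  (exists S : {set 'I_n}, dominating S /\ #|S| = k) /\
  (forall S : {set 'I_n}, dominating S -> k <= #|S|).

Definition is_total_domination_number (n k : nat) : Prop :=
  (exists S : {set 'I_n}, total_dominating S /\ #|S| = k) /\
  (forall S : {set 'I_n}, total_dominating S -> k <= #|S|).

Definition jac_prop (n m : nat) : Prop :=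
  forall a : int, exists i : nat, i < m /\ coprimez (a + i%:Z) n%:Z.

Definition is_jacobsthal (n m : nat) : Prop :=
  0 < m /\ jac_prop n m /\ (forall m', 0 < m' -> jac_prop n m' -> m <= m').

(* Main.v *)
Require Import Defs.
From HB Require Import structures.
From mathcomp Require Import all_boot all_order all_algebra.
From mathcomp Require Import zify ring.
From Stdlib Require Import Classical.
Set Implicit Arguments. Unset Strict Implicit. Unset Printing Implicit Defensive.
Import Order.TTheory GRing.Theory Num.Theory.

Lemma ex_min (P : nat -> Prop) : (exists k, P k) ->
  exists k, P k /\ forall k', P k' -> k <= k'.
Proof.
case=> k0 Pk0.
suff H : forall m k, k <= m -> P k -> exists k, P k /\ forall k', P k' -> k <= k'.
  exact: (H k0 k0 (leqnn _) Pk0).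
elim=> [|m IH] k.
  rewrite leqn0 => /eqP -> P0; exists 0; split => //.
move=> Hk Pk.
case: (classic (exists k', k' < k /\ P k')) => [[k' [lt Pk']]|Hn].
  by apply: (IH k') => //; lia.
exists k; split => // k' Pk'; rewrite leqNgt; apply/negP => lt.
by apply: Hn; exists k'.
Qed.

Lemma coprimez_shift (a k m : int) : coprimez (a + k * m)%R m = coprimez a m.
Proof. by rewrite /coprimez gcdzC addrC gcdzMDl gcdzC. Qed.

Lemma count_iota_period (f : pred nat) m s :
  (forall x, f (x + m) = f x) -> count f (iota s m) = count f (iota 0 m).
Proof.
move=> per; elim: s => // s IH.
case: m per IH => // m per IH.
rewrite -IH /=.
have -> : f s.+1 + count f (iota s.+2 m) = count f (iota s.+1 m.+1) by [].
rewrite -[m.+1]addn1 iotaD count_cat /= addn0 addnC.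
by rewrite addSnnS per.
Qed.

Lemma count_iota_mul (f : pred nat) m s k :
  (forall x, f (x + m) = f x) -> count f (iota s (k * m)) = k * count f (iota 0 m).
Proof.
move=> per; elim: k s => // k IH s.
by rewrite mulSn iotaD count_cat count_iota_period // IH.
Qed.

Lemma count_le1 (s : seq nat) (p : pred nat) : uniq s ->
  {in s &, forall x y, p x -> p y -> x = y} -> count p s <= 1.
Proof.
elim: s => //= x s IH /andP[xs us] H.
case px: (p x) => /=.
  rewrite -[1]addn0 leq_add2l leqn0 eqn0Ngt -has_count; apply/negP => /hasP [y ys py].
  have := H x y; rewrite !inE eqxx ys orbT => /(_ isT isT px py) E.
  by move: xs; rewrite E ys.
apply: IH => // y z ys zs; apply: H; rewrite inE ?ys ?zs orbT //.
Qed.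

Lemma count_has_le (s U : seq nat) (p : nat -> pred nat) :
  (forall i, i \in U -> count (p i) s <= 1) ->
  count (fun x => has (fun i => p i x) U) s <= size U.
Proof.
elim: U => [|i U IH] H /=; first by rewrite count_pred0.
have := count_predUI (p i) (fun x => has (fun i => p i x) U) s.
move=> E; apply: (@leq_trans (count (p i) s + count (fun x => has (fun i => p i x) U) s)).
  by rewrite -E leq_addr.
rewrite -add1n leq_add //; first by apply: H; rewrite inE eqxx.
by apply: IH => j jU; apply: H; rewrite inE jU orbT.
Qed.

Lemma count_split (s : seq nat) (a b : pred nat) :
  count a s <= count (fun x => a x && ~~ b x) s + count b s.
Proof.
elim: s => //= x s IH.
by case: (a x); case: (b x) => /=; lia.
Qed.

Definition B30 : seq nat := [:: 0;1;2;3;4;5;8;12;15;16;17;18;19;20;23;27].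
Definition Lset c := [seq x <- iota 0 (30 * c.+1) | (30 <= x) || (x \in B30)].
Definition cop30 (v x : nat) : bool := coprimez (v%:Z - x%:Z)%R 30.
Definition Uset c := [seq i <- iota 0 (17 + 30 * c) | coprime (20 + i) 30].

Lemma cop30_per v x : cop30 v (x + 30) = cop30 v x.
Proof.
rewrite /cop30 -(coprimez_shift _ 1 30); congr coprimez.
rewrite PoszD; ring.
Qed.

Lemma cop30_mod v x : cop30 v x = cop30 (v %% 30) x.
Proof.
rewrite /cop30 -(coprimez_shift ((v %% 30)%:Z - x%:Z)%R (v %/ 30)%:Z 30); congr coprimez.
rewrite {1}(divn_eq v 30) PoszD PoszM; ring.
Qed.

Lemma check_full : all (fun w => count (cop30 w) (iota 0 30) == 8) (iota 0 30).
Proof. by vm_compute. Qed.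

Lemma check_base : all (fun w => 4 <= count (fun x => (x \in B30) && cop30 w x) (iota 0 30)) (iota 0 30).
Proof. by vm_compute. Qed.

Lemma check_U : (count (fun i => coprime (20 + i) 30) (iota 0 17) == 3)
  && (count (fun i => coprime (20 + i) 30) (iota 0 30) == 8).
Proof. by vm_compute. Qed.

Lemma full_count v : count (cop30 v) (iota 0 30) = 8.
Proof.
rewrite (eq_count (a2 := cop30 (v %% 30))); last by move=> x; rewrite -cop30_mod.
by have /allP /(_ (v %% 30)) := check_full; rewrite mem_iota ltn_mod /= => /(_ isT) /eqP.
Qed.

Lemma size_L c : size (Lset c) = 16 + 30 * c.
Proof.
rewrite size_filter mulnS iotaD count_cat.
congr (_ + _).
rewrite (@eq_in_count _ _ predT); first by rewrite count_predT size_iota.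
by move=> x; rewrite mem_iota => /andP[le _]; rewrite le.
Qed.

Lemma cover30 c v : 4 + 8 * c <= count (cop30 v) (Lset c).
Proof.
rewrite /Lset count_filter mulnS iotaD count_cat leq_add //.
  rewrite (@eq_in_count _ _ (fun x => (x \in B30) && cop30 (v %% 30) x)).
    by have /allP /(_ (v %% 30)) := check_base; rewrite mem_iota ltn_mod /= => /(_ isT).
  move=> x; rewrite mem_iota => /andP[_ lt].
  by rewrite /predI /= leqNgt lt /= andbC -cop30_mod.
rewrite (@eq_in_count _ _ (cop30 v)).
  rewrite add0n [30 * c]mulnC count_iota_mul ?full_count; first by rewrite mulnC.
  by move=> x; exact: cop30_per.
by move=> x; rewrite mem_iota add0n => /andP[le _] /=; rewrite le andbT.
Qed.

Lemma size_U c : size (Uset c) = 3 + 8 * c.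
Proof.
rewrite size_filter iotaD count_cat; move/andP: check_U => [/eqP -> /eqP E].
rewrite add0n [30 * c]mulnC count_iota_mul ?E; first by rewrite mulnC.
move=> x; rewrite -coprime_modl addnA modnDr coprime_modl //.
Qed.

Fixpoint Pr (B : nat) (k : nat) : nat :=
  match k with
  | 0 => s2val (prime_above B)
  | k'.+1 => s2val (prime_above (Pr B k'))
  end.

Lemma Pr_prime B k : prime (Pr B k).
Proof. by case: k => [|k] /=; case: (prime_above _). Qed.

Lemma Pr_S B k : Pr B k < Pr B k.+1.
Proof. by rewrite /=; case: (prime_above _). Qed.

Lemma Pr_gt B k : B < Pr B k.
Proof.
elim: k => [|k IH]; first by rewrite /=; case: (prime_above _).
exact: ltn_trans IH (Pr_S B k).
Qed.

Lemma Pr_inj B : injective (Pr B).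
Proof.
have H : {homo Pr B : i j / i < j}.
  apply: homo_ltn; [exact: ltn_trans | exact: Pr_S].
move=> i j E; case: (ltngtP i j) => // lt; have := H _ _ lt; by rewrite E ltnn.
Qed.

Lemma prime_gt30_coprime q : prime q -> 30 < q -> coprime 30 q.
Proof.
move=> pq lt; rewrite coprime_sym prime_coprime //; apply/negP => /(@dvdn_leq q 30 isT).
by rewrite leqNgt lt.
Qed.

Lemma dvd_prod_mem (f : nat -> nat) (l : seq nat) i :
  i \in l -> f i %| \prod_(k <- l) f k.
Proof. by move=> il; rewrite (big_rem _ il) /= dvdn_mulr. Qed.

Lemma crt (f : nat -> nat) (l : seq nat) : uniq (map f l) ->
  (forall i, i \in l -> prime (f i) /\ 30 < f i) ->
  exists a, a = 20 %[mod 30] /\ forall i, i \in l -> f i %| a + i.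
Proof.
elim: l => [|i l IH] /=.
  by move=> _ _; exists 20; split.
move=> /andP[fil ul] H.
have Hl : forall k, k \in l -> prime (f k) /\ 30 < f k.
  by move=> k kl; apply: H; rewrite inE kl orbT.
have [pi gti] : prime (f i) /\ 30 < f i by apply: H; rewrite inE eqxx.
have [a0 [a0m a0d]] := IH ul Hl.
set M := 30 * \prod_(k <- l) f k.
have coM : coprime M (f i).
  rewrite coprimeMl prime_gt30_coprime //= big_seq.
  apply: (big_ind (fun x => coprime x (f i))); [exact: coprime1n| |].
    by move=> x y cx cy; rewrite coprimeMl cx cy.
  move=> k kl; have [pk _] := Hl k kl.
  rewrite prime_coprime // dvdn_prime2 //; apply/eqP => E.
  by move: fil; rewrite -E map_f.
set x := f i - i %% f i.
exists (chinese M (f i) a0 x).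
have cl := chinese_modl coM a0 x.
have cr := chinese_modr coM a0 x.
split.
  have d30 : 30 %| M by rewrite /M dvdn_mulr.
  by rewrite -a0m -(modn_dvdm (chinese M (f i) a0 x) d30) cl (modn_dvdm a0 d30).
move=> k; rewrite inE => /orP[/eqP -> | kl].
  rewrite /dvdn -modnDml cr modnDml -modnDmr /x subnK ?modnn //.
  by apply: ltnW; rewrite ltn_mod prime_gt0.
have dk : f k %| M by rewrite /M dvdn_mull // dvd_prod_mem.
have := a0d k kl.
rewrite /dvdn -modnDml => H0.
by rewrite -modnDml -(modn_dvdm (chinese M (f i) a0 x) dk) cl (modn_dvdm a0 dk).
Qed.

Lemma jac_self n : 0 < n -> jac_prop n n.
Proof.
move=> n0 a.
have nz : (n%:Z != 0)%R by rewrite eqz_nat -lt0n.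
set r := ((1 - a) %% n%:Z)%Z.
have r0 : (0 <= r)%R by apply: modz_ge0.
have rn : (r < n%:Z)%R by apply: ltz_pmod; rewrite ltz_nat.
exists `|r|%N; split.
  by rewrite -ltz_nat gez0_abs.
rewrite gez0_abs //.
have -> : (a + r = 1 + (- ((1 - a) %/ n%:Z)%Z) * n%:Z)%R.
  have E := divz_eq (1 - a) n%:Z; rewrite /r.
  move: ((1 - a) %/ n%:Z)%Z ((1 - a) %% n%:Z)%Z E => q r1 E.
  have -> : r1 = (1 - a - q * n%:Z)%R by rewrite E; ring.
  ring.
by rewrite coprimez_shift coprimezE /= coprime1n.
Qed.

Lemma absz_lt (x y m : nat) : x < m -> y < m -> (`|(x%:Z - y%:Z)%R|%N < m).
Proof. move=> hx hy; lia. Qed.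

Lemma U_prop c i : i < 17 + 30 * c -> coprime (20 + i) 30 -> i \in Uset c.
Proof. by move=> lt co; rewrite mem_filter co mem_iota lt. Qed.

Lemma L_lt c x : x \in Lset c -> x < 30 * c.+1.
Proof. by rewrite mem_filter mem_iota => /andP[_ /andP[_ ->]]. Qed.

Lemma L_uniq c : uniq (Lset c).
Proof. by rewrite filter_uniq // iota_uniq. Qed.

Lemma U_uniq c : uniq (Uset c).
Proof. by rewrite filter_uniq // iota_uniq. Qed.

Lemma prod_gt0 (l : seq nat) (f : nat -> nat) :
  (forall i, prime (f i)) -> 0 < \prod_(i <- l) f i.
Proof.
move=> H; elim: l => [|i l IH]; first by rewrite big_nil.
by rewrite big_cons muln_gt0 IH prime_gt0.
Qed.

Theorem corollary3p2 :
  forall N : nat, exists n : nat,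
    0 < n /\ N <= size (primes n) /\
    exists gd gt g : nat,
      [/\ is_domination_number n gd, is_total_domination_number n gt,
          is_jacobsthal n g, gd <= gt & gt + 2 <= g].
Proof.
move=> c.
pose B := 30 * c.+1 + 30.
pose U := Uset c.
pose P := Pr B.
pose Q := \prod_(i <- U) P i.
pose n := 30 * Q.
have PB i : B < P i by apply: Pr_gt.
have Pp i : prime (P i) by apply: Pr_prime.
have Qpos : 0 < Q.
  by apply: prod_gt0.
have n0 : 0 < n by rewrite /n muln_gt0 Qpos.
have U3 : 3 \in U by apply: U_prop; [lia | by []].
have QB : B < Q.
  apply: (leq_trans (PB 3)); apply: dvdn_leq Qpos _; exact: dvd_prod_mem.
have Ln x : x \in Lset c -> x < n.
  move=> /L_lt lt; rewrite /n; lia.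
have uPU : uniq (map P U) by rewrite map_inj_uniq ?U_uniq //; exact: Pr_inj.
exists n; split => //; split.
  apply: (@leq_trans (size (map P U))).
    by rewrite size_map /U size_U; lia.
  apply: uniq_leq_size => // p /mapP [i iU ->].
  by rewrite mem_primes Pp n0 /n dvdn_mull // dvd_prod_mem.
pose S := [set x : 'I_n | val x \in Lset c].
have tdS : total_dominating S.
  move=> v; set vv := val v.
  pose bad := fun x : nat => has (fun i => ((P i)%:Z %| (vv%:Z - x%:Z)%R)%Z) U.
  have hbad : count bad (Lset c) <= size U.
    apply: (count_has_le (p := fun i x => ((P i)%:Z %| (vv%:Z - x%:Z)%R)%Z)) => i iU.
    apply: count_le1; first exact: L_uniq.
    move=> x y xL yL dx dy; apply/eqP; apply/negP => /negP nxy.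
    have dxy : ((P i)%:Z %| (x%:Z - y%:Z)%R)%Z.
      have -> : (x%:Z - y%:Z = (vv%:Z - y%:Z) - (vv%:Z - x%:Z))%R.
        by ring.
      by rewrite rpredB.
    move: dxy; rewrite /dvdz /= => /dvdn_leq.
    have hlt := absz_lt (L_lt xL) (L_lt yL).
    have hpos : 0 < `|(x%:Z - y%:Z)%R|%N by move: nxy; lia.
    move=> /(_ hpos) hle.
    have := PB i; rewrite /B; lia.
  have hcov := cover30 c vv.
  have hsp := count_split (Lset c) (cop30 vv) bad.
  have : has (fun x => cop30 vv x && ~~ bad x) (Lset c).
    rewrite has_count; move: hbad hcov hsp; rewrite /U size_U; lia.
  move=> /hasP [x xL /andP [cx bx]].
  exists (Ordinal (Ln x xL)); first by rewrite inE.
  rewrite /Xadj /=; apply/andP; split.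
    apply/eqP => E; move: cx; rewrite /cop30 /vv E /= subrr.
    by rewrite /coprimez gcd0z.
  rewrite coprimezE /=.
  suff : coprime `|(vv%:Z - x%:Z)%R| (30 * Q) by [].
  rewrite coprimeMr; apply/andP; split; first exact: cx.
  rewrite /Q big_seq; apply: (big_ind (fun y => coprime _ y)).
  - exact: coprimen1.
  - by move=> y z cy cz; rewrite coprimeMr cy cz.
  move=> i iU; rewrite coprime_sym prime_coprime //.
  move: bx; rewrite /bad => /hasPn /(_ i iU).
  by rewrite /dvdz.
have cardS : #|S| <= 16 + 30 * c.
  rewrite -size_L cardE.
  apply: (@leq_trans (size (map val (enum S)))); first by rewrite size_map.
  apply: uniq_leq_size; first by rewrite map_inj_uniq ?enum_uniq //; exact: val_inj.
  by move=> x /mapP [y]; rewrite mem_enum inE => yS ->.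
have [a [am ad]] : exists a, a = 20 %[mod 30] /\ forall i, i \in U -> P i %| a + i.
  apply: crt => // i _; split => //; have := PB i; rewrite /B; lia.
have run : forall i, i < 17 + 30 * c -> ~~ coprime (a + i) n.
  move=> i lt; case co: (coprime (20 + i) 30).
    have iU : i \in U by apply: U_prop.
    rewrite coprime_sym; apply/negP => cop.
    have : coprime (P i) (a + i).
      apply: (coprime_dvdl _ cop); rewrite /n dvdn_mull // dvd_prod_mem //.
    by rewrite prime_coprime // ad.
  rewrite /n coprimeMr -coprime_modl -modnDml am modnDml coprime_modl co.
  by [].
have [gt [[S0 [tdS0 cS0]] gtmin]] := ex_min (ex_intro (fun k => exists S : {set 'I_n}, total_dominating S /\ #|S| = k) _ (ex_intro _ S (conj tdS (erefl _)))).
have [gd [[S1 [dS1 cS1]] gdmin]] := ex_min (ex_intro (fun k => exists S : {set 'I_n}, dominating S /\ #|S| = k) _ (ex_intro _ S0 (conj (fun v => or_intror (tdS0 v)) cS0))).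
have [g [[g0 jg] gmin]] := ex_min (ex_intro (fun k => 0 < k /\ jac_prop n k) _ (conj n0 (jac_self n0))).
exists gd, gt, g; split.
- split; first by exists S1.
  by move=> T dT; apply: gdmin; exists T.
- split; first by exists S0.
  by move=> T dT; apply: gtmin; exists T.
- split => //; split => // m' m0 jm; apply: gmin; split => //.
- rewrite -cS0; apply: gdmin; exists S0; split => // v; right; exact: tdS0 v.
- have gtS : gt <= #|S| by apply: gtmin; exists S.
  have gbig : 18 + 30 * c <= g.
    rewrite leqNgt; apply/negP => lt.
    have [i [ig ci]] := jg (Posz a).
    have : ~~ coprime (a + i) n by apply: run; lia.
    by move: ci; rewrite coprimezE /= => ->.
  lia.
Qed.
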